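(* If $\mathsf K$ is a variety of $\tau$-algebras, then $\mathsf K^{\triangle}$ is a variety of infinitary clone $\tau$-algebras.
   Context: $\tau$ is a set of $\omega$-ary operation symbols disjoint from $\{q\}\cup\{e_i:i\in\omega\}$; a $\tau$-algebra is $\mathbf A=(A,f^{\mathbf A})_{f\in\tau}$ with $f^{\mathbf A}:A^\omega\to A$. A variety is a class closed under isomorphic copies, homomorphic images, subalgebras and arbitrary direct products. $\bar\tau$ is the type with nullary $e_i$ ($i\in\omega$), nullary $f$ for each $f\in\tau$, and $\omega$-ary $q$. An infinitary clone $\tau$-algebra is a $\bar\tau$-algebra satisfying (N1) $q(e_i,x_0,x_1,\dots)=x_i$; (N2) $q(x,e_0,e_1,\dots)=x$; (N3) $q(q(x,y_0,y_1,\dots),\boldsymbol z)=q(x,q(y_0,\boldsymbol z),q(y_1,\boldsymbol z),\dots)$ with $\boldsymbol z=(z_0,z_1,\dots)$. For a $\tau$-algebra $\mathbf A$, $\mathcal O^{(\omega)}_{\mathbf A}$ is the infinitary clone $\tau$-algebra whose universe is all functions $A^\omega\to A$, with $e_i(s)=s_i$, $q(g_0,g_1,\dots)(s)=g_0(g_1(s),g_2(s),\dots)$, constant $f$ interpreted as $f^{\mathbf A}$. For a class $\mathsf K$ of $\tau$-algebras, $\mathsf K^{\triangle}$ is the class of infinitary clone $\tau$-algebras isomorphic to a subalgebra of $\mathcal O^{(\omega)}_{\mathbf A}$ for some $\mathbf A\in\mathsf K$. *)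

(* Defs.v *)
Record signature := Signature { sym : Type; arity : sym -> Type }.

Record algebra (s : signature) := Algebra {
  carrier :> Type;
  op : forall o : sym s, (arity s o -> carrier) -> carrier }.
Arguments Algebra {s} carrier op.
Arguments carrier {s} a.
Arguments op {s} a o _.

Section General.
Variable s : signature.

Definition is_hom (A B : algebra s) (h : A -> B) : Prop :=
  forall (o : sym s) (a : arity s o -> A), h (op A o a) = op B o (fun i => h (a i)).

Definition isomorphic (A B : algebra s) : Prop :=
  exists (h : A -> B) (g : B -> A), is_hom A B h /\
    (forall x, g (h x) = x) /\ (forall y, h (g y) = y).

Definition hom_image (A B : algebra s) : Prop :=
  exists h : A -> B, is_hom A B h /\ forall y : B, exists x : A, h x = y.

Definition closed (A : algebra s) (P : A -> Prop) : Prop :=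
  forall (o : sym s) (a : arity s o -> A), (forall i, P (a i)) -> P (op A o a).

Definition subalg (A : algebra s) (P : A -> Prop) (HP : closed A P) : algebra s :=
  Algebra {x : A | P x}
    (fun o a => exist P (op A o (fun i => proj1_sig (a i)))
                        (HP o _ (fun i => proj2_sig (a i)))).

Definition prod_alg (I : Type) (A : I -> algebra s) : algebra s :=
  Algebra (forall i, A i) (fun o a => fun i => op (A i) o (fun j => a j i)).

Definition iso_sub (B A : algebra s) : Prop :=
  exists (P : A -> Prop) (HP : closed A P), isomorphic B (subalg A P HP).

Definition is_variety (K : algebra s -> Prop) : Prop :=
  (forall A B : algebra s, K A -> isomorphic A B -> K B) /\
  (forall A B : algebra s, K A -> hom_image A B -> K B) /\
  (forall (A : algebra s) (P : A -> Prop) (HP : closed A P), K A -> K (subalg A P HP)) /\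
  (forall (I : Type) (A : I -> algebra s), (forall i, K (A i)) -> K (prod_alg I A)).
End General.

Definition tau_sig (T : Type) : signature := Signature T (fun _ => nat).

(* bar tau: nullary e_i (i : nat), nullary f (f : T), omega-ary q;
   the sum type makes T disjoint from {q} and {e_i}. *)
Inductive barsym (T : Type) : Type :=
  | Esym : nat -> barsym T
  | Fsym : T -> barsym T
  | Qsym : barsym T.
Arguments Esym {T} _.
Arguments Fsym {T} _.
Arguments Qsym {T}.

Definition bar_arity (T : Type) (o : barsym T) : Type :=
  match o with Qsym => nat | _ => Empty_set end.

Definition bar_sig (T : Type) : signature := Signature (barsym T) (bar_arity T).

Section Clone.
Variable T : Type.
Variable B : algebra (bar_sig T).

Definition ce (i : nat) : B := op B (Esym i : sym (bar_sig T)) (fun z : Empty_set => match z with end).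
(* q(x, y_0, y_1, ...) : argument 0 is x, argument n+1 is y_n *)
Definition cq (x : B) (y : nat -> B) : B :=
  op B (Qsym : sym (bar_sig T)) (fun n => match n with 0 => x | S m => y m end).

Definition is_clone_alg : Prop :=
  (forall (i : nat) (x : nat -> B), cq (ce i) x = x i) /\
  (forall x : B, cq x ce = x) /\
  (forall (x : B) (y z : nat -> B), cq (cq x y) z = cq x (fun n => cq (y n) z)).
End Clone.

Definition Oomega (T : Type) (A : algebra (tau_sig T)) : algebra (bar_sig T) :=
  @Algebra (bar_sig T) ((nat -> A) -> A)
    (fun (o : barsym T) =>
       match o return (bar_arity T o -> ((nat -> A) -> A)) -> ((nat -> A) -> A) with
       | Esym i => fun _ s => s i
       | Fsym f => fun _ => op A (f : sym (tau_sig T))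
       | Qsym => fun g s => g 0 (fun n => g (S n) s)
       end).

Definition triangle (T : Type) (K : algebra (tau_sig T) -> Prop) (B : algebra (bar_sig T)) : Prop :=
  is_clone_alg T B /\ exists A : algebra (tau_sig T), K A /\ iso_sub (bar_sig T) B (Oomega T A).

(* Main.v *)
Require Import Defs.
From Stdlib Require Import FunctionalExtensionality ProofIrrelevance IndefiniteDescription.

Section S.
Variable T : Type.
Notation BA := (algebra (bar_sig T)).
Notation TA := (algebra (tau_sig T)).

Definition cst (B : BA) (f : T) : B :=
  op B (Fsym f : sym (bar_sig T)) (fun z : Empty_set => match z with end).

Definition tauify (B : BA) : TA :=
  @Algebra (tau_sig T) (carrier B) (fun f a => cq T B (cst B f) a).

Lemma empty_fun_eq (X : Type) (u v : Empty_set -> X) : u = v.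
Proof. apply functional_extensionality; intros []. Qed.

Lemma match_eta (X : Type) (a : nat -> X) :
  (fun n => match n with 0 => a 0 | S m => a (S m) end) = a.
Proof. apply functional_extensionality; intros [|n]; reflexivity. Qed.

Section Hom.
Variables B C : BA.
Variable h : B -> C.
Hypothesis Hh : is_hom (bar_sig T) B C h.

Lemma hom_ce i : h (ce T B i) = ce T C i.
Proof. unfold ce. rewrite Hh. f_equal. apply empty_fun_eq. Qed.

Lemma hom_cst f : h (cst B f) = cst C f.
Proof. unfold cst. rewrite Hh. f_equal. apply empty_fun_eq. Qed.

Lemma hom_cq x y : h (cq T B x y) = cq T C (h x) (fun n => h (y n)).
Proof. unfold cq. rewrite Hh. f_equal. apply functional_extensionality; intros [|n]; reflexivity. Qed.

Lemma hom_tauify : is_hom (tau_sig T) (tauify B) (tauify C) h.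
Proof. intros f a. cbn. rewrite hom_cq, hom_cst. reflexivity. Qed.

Lemma clone_surj (g : C -> B) (hg : forall y, h (g y) = y) :
  is_clone_alg T B -> is_clone_alg T C.
Proof.
  intros [N1 [N2 N3]]. split; [|split].
  - intros i x.
    transitivity (cq T C (h (ce T B i)) (fun n => h (g (x n)))).
    { rewrite hom_ce. f_equal. apply functional_extensionality; intro n. auto. }
    rewrite <- hom_cq, N1. auto.
  - intros x.
    transitivity (cq T C (h (g x)) (fun n => h (ce T B n))).
    { rewrite hg. f_equal. apply functional_extensionality; intro n. rewrite hom_ce; auto. }
    rewrite <- hom_cq, N2. auto.
  - intros x y z.
    transitivity (cq T C (cq T C (h (g x)) (fun n => h (g (y n)))) (fun n => h (g (z n)))).
    { rewrite hg. replace (fun n => h (g (y n))) with y by (apply functional_extensionality; intro n; auto).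
      replace (fun n => h (g (z n))) with z by (apply functional_extensionality; intro n; auto). reflexivity. }
    rewrite <- !hom_cq, N3, hom_cq, hg. f_equal. apply functional_extensionality; intro n.
    rewrite hom_cq, hg. f_equal. apply functional_extensionality; intro m. auto.
Qed.

Lemma clone_inj (HI : forall x y, h x = h y -> x = y) :
  is_clone_alg T C -> is_clone_alg T B.
Proof.
  intros [N1 [N2 N3]]. split; [|split].
  - intros i x. apply HI. rewrite hom_cq, hom_ce, N1. reflexivity.
  - intros x. apply HI. rewrite hom_cq.
    rewrite <- (N2 (h x)) at 2. f_equal. apply functional_extensionality; intro n.
    apply hom_ce.
  - intros x y z. apply HI. rewrite !hom_cq, N3. f_equal.
    apply functional_extensionality; intro n. rewrite hom_cq. reflexivity.
Qed.
End Hom.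

Lemma iso_sym (A B : BA) : isomorphic _ A B -> isomorphic _ B A.
Proof.
  intros [h [g [Hh [H1 H2]]]]. exists g, h. split; [|split; auto].
  intros o b. rewrite <- (H1 (op A o _)). f_equal. rewrite Hh.
  f_equal. apply functional_extensionality; intro i. auto.
Qed.

Lemma iso_tauify (A B : BA) : isomorphic _ A B -> isomorphic _ (tauify A) (tauify B).
Proof.
  intros [h [g [Hh [H1 H2]]]]. exists h, g. split; auto. apply hom_tauify; auto.
Qed.

Lemma sub_eq (A : Type) (P : A -> Prop) (x y : {a | P a}) : proj1_sig x = proj1_sig y -> x = y.
Proof.
  destruct x as [x px], y as [y py]; cbn; intros ->. f_equal. apply proof_irrelevance.
Qed.

Section Embed.
Variable B : BA.
Hypothesis HB : is_clone_alg T B.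
Definition emb (a : B) : Oomega T (tauify B) := fun s => cq T B a s.
Definition img (x : Oomega T (tauify B)) : Prop := exists a, emb a = x.

Lemma emb_hom o a : emb (op B o a) = op (Oomega T (tauify B)) o (fun i => emb (a i)).
Proof.
  destruct HB as [N1 [N2 N3]].
  destruct o as [i|f|]; cbn.
  - apply functional_extensionality; intro s. unfold emb.
    change (op B (Esym i : sym (bar_sig T)) a) with (op B (Esym i : sym (bar_sig T)) a).
    replace a with (fun z : Empty_set => match z with end : B) by apply empty_fun_eq.
    apply N1.
  - apply functional_extensionality; intro s. unfold emb.
    replace a with (fun z : Empty_set => match z with end : B) by apply empty_fun_eq.
    reflexivity.
  - apply functional_extensionality; intro s. unfold emb.
    change (bar_arity T Qsym) with nat in a.
    replace (op B (Qsym : sym (bar_sig T)) a) with (cq T B (a 0) (fun m => a (S m))).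
    2:{ unfold cq. f_equal. apply match_eta. }
    apply N3.
Qed.

Lemma img_back x : img x -> emb (x (ce T B)) = x.
Proof.
  intros [a <-]. unfold emb at 2. rewrite (proj1 (proj2 HB)). reflexivity.
Qed.

Lemma img_closed : closed _ (Oomega T (tauify B)) img.
Proof.
  intros o x Hx. exists (op B o (fun i => x i (ce T B))).
  rewrite emb_hom. f_equal. apply functional_extensionality; intro i.
  apply img_back. auto.
Qed.

Lemma embed_iso : iso_sub _ B (Oomega T (tauify B)).
Proof.
  exists img, img_closed.
  exists (fun a => exist img (emb a) (ex_intro _ a eq_refl)).
  exists (fun y => proj1_sig y (ce T B)).
  split; [|split].
  - intros o a. apply sub_eq. cbn. apply emb_hom.
  - intros x. cbn. apply (proj1 (proj2 HB)).
  - intros [y py]. apply sub_eq. cbn. apply img_back. auto.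
Qed.
End Embed.

Section Reduct.
Variable A : TA.
Variable P : Oomega T A -> Prop.
Hypothesis HP : closed _ (Oomega T A) P.

Definition PA := prod_alg (tau_sig T) (nat -> A) (fun _ => A).

Lemma P_closed' : closed _ PA P.
Proof.
  intros f a Ha.
  exact (HP (Qsym : sym (bar_sig T))
            (fun n => match n with 0 => op (Oomega T A) (Fsym f : sym (bar_sig T)) (fun z : Empty_set => match z with end) | S m => a m end)
            (fun n => match n with 0 => HP (Fsym f : sym (bar_sig T)) _ (fun z : Empty_set => match z with end) | S m => Ha m end)).
Qed.

Lemma reduct_iso : isomorphic _ (subalg _ PA P P_closed') (tauify (subalg _ (Oomega T A) P HP)).
Proof.
  exists (fun x => x), (fun x => x). split; [|split; auto].
  intros f a. apply sub_eq. reflexivity.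
Qed.
End Reduct.

Section Main.
Variable K : TA -> Prop.
Hypothesis HK : is_variety (tau_sig T) K.

Lemma tri_char B : triangle T K B <-> is_clone_alg T B /\ K (tauify B).
Proof.
  destruct HK as [KI [KH [KS KP]]].
  split.
  - intros [HB [A [KA [P [HP Hiso]]]]]. split; auto.
    assert (K (tauify (subalg _ (Oomega T A) P HP))).
    { eapply KI; [|apply reduct_iso]. apply KS. apply KP. intros; auto. }
    eapply KI; [eassumption|]. apply iso_tauify, iso_sym; auto.
  - intros [HB KB]. split; auto. exists (tauify B). split; auto. apply embed_iso; auto.
Qed.

Lemma tri_hom B C h : is_hom _ B C h -> (forall y, exists x, h x = y) ->
  triangle T K B -> triangle T K C.
Proof.
  intros Hh Hs HB. apply tri_char in HB. destruct HB as [HB KB]. apply tri_char.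
  set (g := fun y => proj1_sig (constructive_indefinite_description _ (Hs y))).
  assert (hg : forall y, h (g y) = y) by (intro y; exact (proj2_sig (constructive_indefinite_description _ (Hs y)))).
  split. eapply clone_surj; eauto.
  destruct HK as [KI [KH [KS KP]]]. eapply KH; [exact KB|]. exists h. split; auto.
  apply hom_tauify; auto.
Qed.


Lemma tri_sub (B : BA) (P : B -> Prop) (HP : closed _ B P) :
  triangle T K B -> triangle T K (subalg _ B P HP).
Proof.
  intro HB. apply tri_char in HB. destruct HB as [HB KB]. apply tri_char.
  destruct HK as [KI [KH [KS KP]]].
  split.
  - apply (clone_inj (subalg _ B P HP) B (@proj1_sig _ _)).
    + intros o a. reflexivity.
    + intros x y. apply sub_eq.
    + exact HB.
  - assert (HP' : closed _ (tauify B) P).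
    { intros f a Ha. unfold tauify, cq; cbn.
      apply HP. intros [|n]; auto. apply HP. intros []. }
    eapply KI. apply (KS (tauify B) P HP' KB).
    exists (fun x => x), (fun x => x). split; [|split; auto].
    intros f a. apply sub_eq. cbn. unfold cq. cbn. f_equal.
    apply functional_extensionality; intros [|n]; auto.
    cbn. unfold cst. f_equal. apply empty_fun_eq.
Qed.

Lemma tri_prod (I : Type) (B : I -> BA) :
  (forall i, triangle T K (B i)) -> triangle T K (prod_alg _ I B).
Proof.
  intro HB. apply tri_char. destruct HK as [KI [KH [KS KP]]].
  assert (HB' : forall i, is_clone_alg T (B i) /\ K (tauify (B i))) by (intro i; apply tri_char; auto).
  split.
  - split; [|split].
    + intros n x. cbn; apply functional_extensionality_dep; intro i; cbn.
      rewrite <- (proj1 (proj1 (HB' i)) n (fun m => x m i)).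
      unfold cq, ce. cbn. f_equal. apply functional_extensionality; intros [|m]; auto. f_equal; apply empty_fun_eq.
    + intros x. cbn; apply functional_extensionality_dep; intro i; cbn.
      transitivity (cq T (B i) (x i) (ce T (B i))); [|apply (proj1 (proj2 (proj1 (HB' i))))].
      unfold cq, ce. cbn. f_equal. apply functional_extensionality; intros [|m]; auto.
      cbn. f_equal; apply empty_fun_eq.
    + intros x y z. cbn; apply functional_extensionality_dep; intro i; cbn.
      pose proof (proj2 (proj2 (proj1 (HB' i))) (x i) (fun m => y m i) (fun m => z m i)) as E.
      unfold cq in *. cbn.
      match goal with |- op _ _ ?F = op _ _ ?G => replace F with (fun n => match n with 0 => cq T (B i) (x i) (fun m => y m i) | S m => z m i end);
        [replace G with (fun n => match n with 0 => x i | S m => cq T (B i) (y m i) (fun k => z k i) end)|] end.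
      * exact E.
      * apply functional_extensionality; intros [|m]; cbn; unfold cq; f_equal; apply functional_extensionality; intros [|k]; auto.
      * apply functional_extensionality; intros [|m]; cbn; unfold cq; f_equal; apply functional_extensionality; intros [|k]; auto.
  - eapply KI. apply (KP I (fun i => tauify (B i))). intro i; apply HB'.
    exists (fun x => x), (fun x => x). split; [|split; auto].
    intros f a. cbn; apply functional_extensionality_dep; intro i; cbn. unfold cq. cbn. f_equal.
    apply functional_extensionality; intros [|n]; auto.
    cbn. unfold cst. f_equal. apply functional_extensionality; intros [].
Qed.

End Main.
End S.

Theorem theorem5p2 (T : Type) (K : algebra (tau_sig T) -> Prop) :
  is_variety (tau_sig T) K ->
  is_variety (bar_sig T) (triangle T K) /\
  (forall B, triangle T K B -> is_clone_alg T B).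
Proof.
  intro HK. split.
  - split; [|split; [|split]].
    + intros A B HA [h [g [Hh [H1 H2]]]]. apply (tri_hom T K HK A B h Hh); auto.
      intro y. exists (g y). auto.
    + intros A B HA [h [Hh Hs]]. apply (tri_hom T K HK A B h Hh); auto.
    + intros A P HP HA. apply tri_sub; auto.
    + intros I A HA. apply tri_prod; auto.
  - intros B HB. apply (tri_char T K HK B) in HB. apply HB.
Qed.
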